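(* Let $n\ge2$, let $A=[a_{kl}]$ be a real $n\times n$ matrix with zero diagonal and $f(\sigma)=\sum_{p=1}^{n-1}\sum_{q=p+1}^n a_{\sigma(p)\sigma(q)}$ its LOP objective function on $\Sigma_n$. For all $i,j\in\{1,\dots,n\}$, $$\frac{1}{(n-1)!}\sum_{\sigma:\sigma(i)=j}f(\sigma)=\frac{i-1}{n-1}\sum_{k\ne j}a_{kj}+\frac{n-i}{n-1}\sum_{k\ne j}a_{jk}+\frac12\sum_{\substack{k\ne l\\ k,l\ne j}}a_{kl}.$$
   Context: $\Sigma_n$ is the symmetric group on $\{1,\dots,n\}$; $\sigma(p)$ is the row/column index placed in position $p$, so $\sigma(i)=j$ means index $j$ is in position $i$. *)

(* Defs.v *)
(* Indices are 0-based: 'I_n = {0,...,n-1} stands for {1,...,n}. *)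
From mathcomp Require Import all_boot all_order all_algebra all_fingroup.
Set Implicit Arguments. Unset Strict Implicit. Unset Printing Implicit Defensive.
Import Order.TTheory GRing.Theory Num.Theory.
Local Open Scope ring_scope.

Definition lop_obj (R : nzRingType) (n : nat) (A : 'M[R]_n) (s : 'S_n) : R :=
  \sum_(p < n) \sum_(q < n | (p < q)%N) A (s p) (s q).

(* Main.v *)
Require Import Defs.
From mathcomp Require Import all_boot all_order all_algebra all_fingroup.
From mathcomp Require Import zify ring.
Import Order.TTheory GRing.Theory Num.Theory.

Lemma cnt_lt (m i : nat) : (\sum_(0 <= q < m | q < i) 1 = minn m i)%N.
Proof.
rewrite big_mkcond; elim: m => [|m IH]; first by rewrite big_nil; lia.
rewrite big_nat_recr //= IH; case: ifP => /= h; lia.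
Qed.

Lemma cnt_gt (m i : nat) : (\sum_(0 <= q < m | i < q) 1 = m - i.+1)%N.
Proof.
rewrite big_mkcond; elim: m => [|m IH]; first by rewrite big_nil.
rewrite big_nat_recr //= IH; case: ifP => /= h; lia.
Qed.

Lemma cnt_ord_lt {n} (i : 'I_n) : (\sum_(q < n | q < i) 1 = i)%N.
Proof. rewrite -(big_mkord (fun q => q < i) (fun _ => 1%N)) cnt_lt; have := ltn_ord i; lia. Qed.

Lemma cnt_ord_gt {n} (i : 'I_n) : (\sum_(q < n | i < q) 1 = n - 1 - i)%N.
Proof. rewrite -(big_mkord (fun q => i < q) (fun _ => 1%N)) cnt_gt; lia. Qed.

Lemma cnt_neq {n} (i : 'I_n) : (\sum_(q < n | q != i) 1 = n.-1)%N.
Proof. by have := sum1_card (predC1 i); rewrite cardC1 card_ord. Qed.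

Lemma cnt_perm n (i j : 'I_n) : (\sum_(s : 'S_n | s i == j) 1 = n.-1`!)%N.
Proof.
have eqN : forall j' : 'I_n, (\sum_(s : 'S_n | s i == j) 1 = \sum_(s : 'S_n | s i == j') 1)%N.
  move=> j'; rewrite (reindex_inj (mulIg (tperm j j'))) /=.
  apply: eq_bigl => s; by rewrite permM (canF_eq (tpermK j j')) tpermL.
have : (n`! = n * \sum_(s : 'S_n | s i == j) 1)%N.
  rewrite -card_Sn -sum1_card (partition_big (fun s : 'S_n => s i) predT) //=.
  rewrite (eq_bigr (fun _ => \sum_(s : 'S_n | s i == j) 1)%N); last by move=> k _; rewrite (eqN k).
  by rewrite sum_nat_const card_ord.
clear eqN; case: n i j => [|n] i j; first by case: i.
rewrite factS => /eqP; rewrite eqn_mul2l /= => /eqP <-.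
done.
Qed.

Lemma sum_constR (R : nzRingType) (I : finType) (P : pred I) (x : R) :
  (\sum_(k | P k) x = (\sum_(k | P k) 1)%N%:R * x)%R.
Proof. by rewrite natr_sum mulr_suml; apply: eq_bigr => k _; rewrite mul1r. Qed.

Local Open Scope ring_scope.

Theorem proposition8 (R : realFieldType) (n : nat) (A : 'M[R]_n)
    (hn : (2 <= n)%N) (hdiag : forall k : 'I_n, A k k = 0) (i j : 'I_n) :
  ((n.-1)`!)%:R^-1 * \sum_(s : 'S_n | s i == j) lop_obj A s
  = (i%:R / (n.-1)%:R) * \sum_(k < n | k != j) A k j
    + ((n - 1 - i)%:R / (n.-1)%:R) * \sum_(k < n | k != j) A j k
    + 2^-1 * \sum_(k < n) \sum_(l < n | [&& k != l, k != j & l != j]) A k l.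
Proof.
set N := (\sum_(s : 'S_n | s i == j) 1)%N.
have sumc : forall x : R, \sum_(s : 'S_n | s i == j) x = N%:R * x.
  by move=> x; rewrite natr_sum mulr_suml; apply: eq_bigr => s _; rewrite mul1r.
pose T := fun p q : 'I_n => \sum_(s : 'S_n | s i == j) A (s p) (s q).
have Tinv : forall t : 'S_n, t i = i -> forall p q, T (t p) (t q) = T p q.
  move=> t ti p q; rewrite /T [RHS](reindex_inj (mulgI t)) /=.
  by apply: eq_big => [s|s _]; rewrite !permM ?ti.
have T0 : forall p, T p p = 0 by move=> p; apply: big1 => s _; rewrite hdiag.
have Tsym : forall p q, p != i -> q != i -> T p q = T q p.
  move=> p q pi qi; have := Tinv (tperm p q) (tpermD pi qi) p q.
  by rewrite tpermL tpermR.
pose Rj := \sum_l A j l. pose Cj := \sum_k A k j.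
have n1 : (n.-1)%:R != 0 :> R by rewrite pnatr_eq0 -lt0n; lia.
have T1 : forall q, q != i -> T i q = N%:R * Rj / (n.-1)%:R.
  move=> q qi; apply: (canRL (mulfK n1)); rewrite mulrC.
  rewrite -(cnt_neq i) natr_sum mulr_suml.
  transitivity (\sum_(q' < n | q' != i) T i q').
    apply: eq_bigr => q' q'i; rewrite mul1r.
    have := Tinv (tperm q q') (tpermD qi q'i) i q.
    by rewrite tpermD // tpermL.
  rewrite /T exchange_big /= -sumc; apply: eq_bigr => s /eqP si.
  rewrite si; symmetry; rewrite /Rj (reindex_inj (@perm_inj _ s)) /= (bigD1 i) //= si hdiag add0r.
  done.
have T2 : forall p, p != i -> T p i = N%:R * Cj / (n.-1)%:R.
  move=> p pi; apply: (canRL (mulfK n1)); rewrite mulrC.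
  rewrite -(cnt_neq i) natr_sum mulr_suml.
  transitivity (\sum_(q' < n | q' != i) T q' i).
    apply: eq_bigr => q' q'i; rewrite mul1r.
    have := Tinv (tperm p q') (tpermD pi q'i) p i.
    by rewrite (tpermD pi q'i) tpermL.
  rewrite /T exchange_big /= -sumc; apply: eq_bigr => s /eqP si.
  rewrite si; symmetry; rewrite /Cj (reindex_inj (@perm_inj _ s)) /= (bigD1 i) //= si hdiag add0r.
  done.
pose W := fun p q : 'I_n => if (p < q)%N then T p q else 0.
have hU : \sum_(s : 'S_n | s i == j) lop_obj A s = \sum_p \sum_q W p q.
  rewrite /lop_obj exchange_big /=; apply: eq_bigr => p _.
  by rewrite exchange_big /= big_mkcond.
have dec : \sum_p \sum_q W p q = \sum_(q | q != i) W i q + \sum_(p | p != i) W p i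
     + \sum_(p | p != i) \sum_(q | q != i) W p q.
  rewrite (bigD1 i) //= [\sum_q W i q](bigD1 i) //= {1}/W ltnn add0r.
  rewrite [X in _ + X = _](eq_bigr (fun p => W p i + \sum_(q | q != i) W p q)); last first.
    by move=> p _; rewrite (bigD1 i).
  by rewrite big_split /= addrA.
have Sa : \sum_(q | q != i) W i q = (n - 1 - i)%:R * (N%:R * Rj / (n.-1)%:R).
  rewrite /W (eq_bigr (fun q : 'I_n => if (i < q)%N then N%:R * Rj / (n.-1)%:R else 0)); last first.
    by move=> q qi; rewrite T1.
  rewrite -big_mkcondr (eq_bigl (fun q : 'I_n => (i < q)%N)); last first.
    by move=> q; apply/andb_idl => iq; rewrite neq_ltn iq orbT.
  by rewrite sum_constR cnt_ord_gt.
have Sb : \sum_(p | p != i) W p i = i%:R * (N%:R * Cj / (n.-1)%:R).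
  rewrite /W (eq_bigr (fun p : 'I_n => if (p < i)%N then N%:R * Cj / (n.-1)%:R else 0)); last first.
    by move=> p pi; rewrite T2.
  rewrite -big_mkcondr (eq_bigl (fun p : 'I_n => (p < i)%N)); last first.
    by move=> p; apply/andb_idl => iq; rewrite neq_ltn iq.
  by rewrite sum_constR cnt_ord_lt.
pose Q := \sum_(k | k != j) \sum_(l | l != j) A k l.
have Wsum : forall p q, p != i -> q != i -> W p q + W q p = T p q.
  move=> p q pi qi; rewrite /W; case: (ltngtP p q) => [pq|qp|/val_inj ->].
  - by rewrite addr0.
  - by rewrite add0r Tsym.
  - by rewrite T0 addr0.
have two0 : (2 : R) != 0 by rewrite pnatr_eq0.
have Sc : \sum_(p | p != i) \sum_(q | q != i) W p q = N%:R * Q / 2.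
  apply: (canRL (mulfK two0)); rewrite mulr_natr mulr2n.
  rewrite [X in _ + X]exchange_big /= -big_split /=.
  rewrite (eq_bigr (fun p => \sum_(q | q != i) T p q)); last first.
    by move=> p pi; rewrite -big_split /=; apply: eq_bigr => q qi; rewrite Wsum.
  rewrite /T; under eq_bigr do rewrite exchange_big /=.
  rewrite exchange_big /= -sumc; apply: eq_bigr => s /eqP si.
  rewrite /Q [RHS](reindex_inj (@perm_inj _ s)) /=.
  apply: eq_big => [p|p pi]; first by rewrite -si (inj_eq perm_inj).
  rewrite [RHS](reindex_inj (@perm_inj _ s)) /=.
  by apply: eq_bigl => q; rewrite -si (inj_eq perm_inj).
have hC : \sum_(k < n | k != j) A k j = Cj by rewrite /Cj [RHS](bigD1 j) //= hdiag add0r.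
have hR : \sum_(k < n | k != j) A j k = Rj by rewrite /Rj [RHS](bigD1 j) //= hdiag add0r.
have hS3 : \sum_(k < n) \sum_(l < n | [&& k != l, k != j & l != j]) A k l = Q.
  rewrite /Q [LHS](bigD1 j) //= big_pred0 ?add0r; last by move=> l; rewrite eqxx andbF.
  apply: eq_bigr => k kj; rewrite big_mkcond [RHS]big_mkcond; apply: eq_bigr => l _.
  rewrite kj /=; case: (eqVneq k l) => [<-|kl] /=; last by [].
  by rewrite hdiag; case: ifP.
have hN : N = (n.-1)`! := cnt_perm n i j.
have N0 : N%:R != 0 :> R by rewrite pnatr_eq0 hN -lt0n fact_gt0.
rewrite hU dec Sa Sb Sc hC hR hS3 -hN.
by field; rewrite ?N0 ?n1 ?two0.
Qed.
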